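(* Let $a=a_1+a_2$ be a generalized core-EP decomposition of $a$ (i.e. $a_1^*a_2=a_2a_1=0$, $a_1$ is core invertible and $a_2\in\mathcal{A}^{qnil}$), and let $p=a_1a_1^{\mathrm{core}}$. Then $a=\begin{pmatrix} t&s\\ 0&n\end{pmatrix}_p$, where $t\in (p\mathcal{A}p)^{-1}$, $n\in (p^{\pi}\mathcal{A}p^{\pi})^{qnil}$.
   Context: $\mathcal{A}$ is a complex Banach *-algebra with identity; $\mathcal{A}^{qnil}$ is the set of quasinilpotent elements. An element $a$ is core invertible if there is $x$ with $a=axa$, $x\mathcal{A}=a\mathcal{A}$, $\mathcal{A}x=\mathcal{A}a^*$; such $x$ is unique and denoted $a^{\mathrm{core}}$. For a projection $p$ ($p=p^2=p^*$), $p^\pi=1-p$, and any $x\in\mathcal{A}$ is written as $x=\begin{pmatrix} pxp&px(1-p)\\ (1-p)xp&(1-p)x(1-p)\end{pmatrix}_p$. *)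

(* Defs.v *)
From HB Require Import structures.
From mathcomp Require Import all_boot all_order all_algebra.
From mathcomp Require Import complex.
From mathcomp Require Import reals.
Set Implicit Arguments. Unset Strict Implicit. Unset Printing Implicit Defensive.
Import Order.TTheory GRing.Theory Num.Theory.
Local Open Scope ring_scope.

HB.mixin Record isBanachStarAlgebra (R : realType) (A : Type)
    of GRing.Algebra R[i] A := {
  star : A -> A;
  bnorm : A -> R;
  starD : forall x y : A, star (x + y) = star x + star y;
  starZ : forall (c : R[i]) (x : A), star (c *: x) = c^* *: star x;
  starM : forall x y : A, star (x * y) = star y * star x;
  starK : forall x : A, star (star x) = x;
  bnorm_ge0 : forall x : A, 0 <= bnorm x;
  bnorm_eq0 : forall x : A, bnorm x = 0 -> x = 0;
  bnormD : forall x y : A, bnorm (x + y) <= bnorm x + bnorm y;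
  bnormZ : forall (c : R[i]) (x : A),
    ((bnorm (c *: x))%:C)%C = `|c| * ((bnorm x)%:C)%C;
  bnormM : forall x y : A, bnorm (x * y) <= bnorm x * bnorm y;
  bnorm_star : forall x : A, bnorm (star x) = bnorm x;
  bnorm_complete : forall u : nat -> A,
    (forall e : R, 0 < e -> exists N : nat, forall m n : nat,
        (N <= m)%N -> (N <= n)%N -> bnorm (u m - u n) < e) ->
    exists l : A, forall e : R, 0 < e -> exists N : nat, forall n : nat,
        (N <= n)%N -> bnorm (u n - l) < e
}.

#[short(type="banachStarAlgType")]
HB.structure Definition BanachStarAlgebra (R : realType) :=
  { A of GRing.Algebra R[i] A & isBanachStarAlgebra R A }.

Section Defs.
Variables (R : realType) (A : banachStarAlgType R).

Definition invertible (x : A) : Prop := exists y : A, x * y = 1 /\ y * x = 1.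

(* quasinilpotent: sigma(x) is contained in {0}, i.e. lambda - x is
   invertible for every nonzero complex lambda *)
Definition qnil (x : A) : Prop :=
  forall l : R[i], l != 0 -> invertible (l%:A - x).

(* x is core invertible with core inverse y:
   x = x y x, yA = xA, Ay = Ax^* *)
Definition is_core_inverse (x y : A) : Prop :=
  [/\ x = x * y * x,
      (forall z : A, exists w : A, y * z = x * w),
      (forall z : A, exists w : A, x * z = y * w),
      (forall z : A, exists w : A, z * y = w * star x) &
      (forall z : A, exists w : A, z * star x = w * y)].

Definition core_invertible (x : A) : Prop := exists y : A, is_core_inverse x y.

Definition is_projection (p : A) : Prop := p * p = p /\ star p = p.

Definition in_corner (p x : A) : Prop := x = p * x * p.

(* invertibility in the corner algebra pAp (whose identity is p) *)
Definition corner_invertible (p x : A) : Prop :=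
  in_corner p x /\ exists y : A, in_corner p y /\ x * y = p /\ y * x = p.

Definition corner_qnil (p x : A) : Prop :=
  in_corner p x /\
  forall l : R[i], l != 0 -> corner_invertible p (l *: p - x).

(* the 2x2 matrix representation relative to p:
   x = [ pxp  px(1-p) ; (1-p)xp  (1-p)x(1-p) ]_p *)
Definition pmatrix (p x : A) : A * A * A * A :=
  (p * x * p, p * x * (1 - p), (1 - p) * x * p, (1 - p) * x * (1 - p)).

End Defs.

(* Main.v *)
Require Import Defs.
From HB Require Import structures.
From mathcomp Require Import all_boot all_order all_algebra.
From mathcomp Require Import complex.
From mathcomp Require Import reals.
Import Order.TTheory GRing.Theory Num.Theory.
Local Open Scope ring_scope.

Theorem lemma4p1 (R : realType) (A : banachStarAlgType R) (a a1 a2 : A)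
    (ha : a = a1 + a2)
    (h12 : star a1 * a2 = 0) (h21 : a2 * a1 = 0)
    (hcore : core_invertible a1) (hq : qnil a2)
    (a1c : A) (ha1c : is_core_inverse a1 a1c) :
  let p := a1 * a1c in
  is_projection p /\
  exists t s n : A,
    pmatrix p a = (t, s, 0, n) /\
    corner_invertible p t /\ corner_qnil (1 - p) n.
Proof.
move=> p.
have hp : p = a1 * a1c by [].
clearbody p.
have [e1 e2 e3 e4 e5] := ha1c.
have [w0 hw0] := e2 1; rewrite mulr1 in hw0.
have [w1 hw1] := e3 1; rewrite mulr1 in hw1.
have [w2 hw2] := e4 1; rewrite mul1r in hw2.
have pa1 : p * a1 = a1 by rewrite hp -e1.
have pa1c : p * a1c = a1c by rewrite hp {2}hw0 mulrA -e1 -hw0.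
have sa1 : star a1 = star a1 * star p by rewrite -starM pa1.
have a1cps : a1c = a1c * star p by rewrite hw2 -mulrA -sa1.
have pps : p = p * star p by rewrite {1}hp {1}a1cps mulrA -hp.
have sp : star p = p by rewrite pps starM starK -pps.
have pp : p * p = p by rewrite {2}hp mulrA pa1 -hp.
have a1cp : a1c * p = a1c by rewrite -sp -a1cps.
have a1ca1a1 : a1c * a1 * a1 = a1.
  by rewrite {2}hw1 mulrA -(mulrA a1c) -hp a1cp -hw1.
have pa2 : p * a2 = 0.
  by rewrite -sp hp starM -mulrA h12 mulr0.
have a2p : a2 * p = 0 by rewrite hp mulrA h21 mul0r.
have pa : p * a = a1 by rewrite ha mulrDr pa1 pa2 addr0.
have ap : a * p = a1 * p by rewrite ha mulrDl a2p addr0.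
have qa : (1 - p) * a = a2 by rewrite mulrBl mul1r pa ha addrAC subrr add0r.
have a2q : a2 * (1 - p) = a2 by rewrite mulrBr mulr1 a2p subr0.
have qa2 : (1 - p) * a2 = a2 by rewrite mulrBl mul1r pa2 subr0.
split; first by [].
exists (a1 * p), (p * a * (1 - p)), a2.
split; first by rewrite /pmatrix pa qa a2q a2p.
split.
  rewrite /corner_invertible /in_corner; split.
    by rewrite -!mulrA pp mulrA pa1.
  exists a1c; split; first by rewrite /in_corner pa1c a1cp.
  split; first by rewrite -mulrA pa1c.
  by rewrite hp !mulrA a1ca1a1.
rewrite /corner_qnil /corner_invertible /in_corner; split.
  by rewrite qa2 a2q.
move=> l l0.
have [z [hz1 hz2]] := hq l l0.
have lpc : (l%:A - a2) * p = p * (l%:A - a2).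
  by rewrite mulrBl mulrBr a2p pa2 -scalerAl -scalerAr mul1r mulr1.
have zp : z * p = p * z.
  by rewrite -{1}(mulr1 p) -hz1 (mulrA p) -lpc -mulrA (mulrA z) hz2 mul1r.
have zq : z * (1 - p) = (1 - p) * z by rewrite mulrBr mulrBl mulr1 mul1r zp.
have lq : l *: (1 - p) - a2 = (l%:A - a2) * (1 - p).
  by rewrite mulrBl a2q -scalerAl mul1r.
have lq' : l *: (1 - p) - a2 = (1 - p) * (l%:A - a2).
  by rewrite mulrBr qa2 -scalerAr mulr1.
have qq : (1 - p) * (1 - p) = 1 - p.
  by rewrite mulrBr mulr1 mulrBl mul1r pp subrr subr0.
split.
  have qX : (1 - p) * (l *: (1 - p) - a2) = l *: (1 - p) - a2.
    by rewrite {2}lq' lq' mulrA qq.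
  have Xq : (l *: (1 - p) - a2) * (1 - p) = l *: (1 - p) - a2.
    by rewrite {2}lq lq -mulrA qq.
  by rewrite /in_corner qX Xq.
have qY : (1 - p) * ((1 - p) * z) = (1 - p) * z by rewrite mulrA qq.
have Yq : (1 - p) * z * (1 - p) = (1 - p) * z.
  by rewrite -mulrA zq mulrA qq.
exists ((1 - p) * z); split.
  by rewrite /in_corner qY Yq.
split.
  by rewrite lq -mulrA qY -zq mulrA hz1 mul1r.
by rewrite lq' -mulrA (mulrA z) zq -mulrA hz2 mulr1 qq.
Qed.
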